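(* Let $X$ be a Polish space, $f:X\to\mathbb R$ a Baire-1 function and $a<b$ reals. Then $$\alpha(f,a,b)=\sup\{\alpha(f,K,a,b):K\subseteq X\text{ compact}\}.$$
   Context: Separation rank: for $f:X\to\mathbb R$, reals $a<b$ and closed $F\subseteq X$, let $F'_{f,a,b}=\overline{F\cap[f<a]}\cap\overline{F\cap[f>b]}$, where $[f<a]=\{x:f(x)<a\}$, $[f>b]=\{x:f(x)>b\}$. Define iterated derivatives $F^{(0)}_{f,a,b}=F$, $F^{(\xi+1)}_{f,a,b}=(F^{(\xi)}_{f,a,b})'_{f,a,b}$ and $F^{(\lambda)}_{f,a,b}=\bigcap_{\xi<\lambda}F^{(\xi)}_{f,a,b}$ for limit $\lambda$. $\alpha(f,F,a,b)$ is the least ordinal $\xi$ with $F^{(\xi)}_{f,a,b}=\varnothing$ if such $\xi<\omega_1$ exists, and $\omega_1$ otherwise; $\alpha(f,a,b)=\alpha(f,X,a,b)$. *)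

(* Defs.v *)
From Stdlib Require Import Reals List.
Open Scope R_scope.

(** * Metric spaces (a Polish space is represented by a type with a
      compatible mcomplete separable metric). Subsets are predicates. *)
Section Metric.

Context {X : Type}.
Variable d : X -> X -> R.

Definition is_metric : Prop :=
  (forall x y, 0 <= d x y) /\
  (forall x y, d x y = 0 <-> x = y) /\
  (forall x y, d x y = d y x) /\
  (forall x y z, d x z <= d x y + d y z).

Definition cauchy (u : nat -> X) : Prop :=
  forall eps, 0 < eps -> exists N, forall m n, (N <= m)%nat -> (N <= n)%nat ->
    d (u m) (u n) < eps.

Definition converges (u : nat -> X) (x : X) : Prop :=
  forall eps, 0 < eps -> exists N, forall n, (N <= n)%nat -> d (u n) x < eps.

Definition mcomplete : Prop :=
  forall u, cauchy u -> exists x, converges u x.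

(** countable dense subset (enumerated with [option] to allow X mempty) *)
Definition separable : Prop :=
  exists s : nat -> option X,
    forall x eps, 0 < eps -> exists n y, s n = Some y /\ d x y < eps.

Definition polish : Prop := is_metric /\ mcomplete /\ separable.

Definition is_open (U : X -> Prop) : Prop :=
  forall x, U x -> exists eps, 0 < eps /\ forall y, d x y < eps -> U y.

Definition mcompact (K : X -> Prop) : Prop :=
  forall (I : Type) (U : I -> X -> Prop),
    (forall i, is_open (U i)) ->
    (forall x, K x -> exists i, U i x) ->
    exists l : list I, forall x, K x -> exists i, In i l /\ U i x.

Definition mcontinuous (g : X -> R) : Prop :=
  forall x eps, 0 < eps -> exists delta, 0 < delta /\
    forall y, d x y < delta -> Rabs (g y - g x) < eps.

Definition baire1 (f : X -> R) : Prop :=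
  exists g : nat -> X -> R, (forall n, mcontinuous (g n)) /\
    forall x, Un_cv (fun n => g n x) (f x).

Definition mclosure (A : X -> Prop) (x : X) : Prop :=
  forall eps, 0 < eps -> exists y, A y /\ d x y < eps.

Definition mempty (A : X -> Prop) : Prop := forall x, ~ A x.

Definition sderiv (f : X -> R) (a b : R) (F : X -> Prop) : X -> Prop :=
  fun x => mclosure (fun y => F y /\ f y < a) x /\
           mclosure (fun y => F y /\ f y > b) x.
End Metric.

(** * Countable ordinals as Brouwer trees *)
Inductive Ord : Type :=
| OZ : Ord
| OS : Ord -> Ord
| OL : (nat -> Ord) -> Ord.   (* supremum of a sequence *)

(** the ordinal order (a preorder on trees; sound and mcomplete for the
    ordinal interpretation) *)
Inductive ole : Ord -> Ord -> Prop :=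
| ole_Z : forall x, ole OZ x
| ole_succ : forall x, ole x (OS x)
| ole_S : forall x y, ole x y -> ole (OS x) (OS y)
| ole_cocone : forall x g n, ole x (g n) -> ole x (OL g)
| ole_limiting : forall g x, (forall n, ole (g n) x) -> ole (OL g) x
| ole_trans : forall x y z, ole x y -> ole y z -> ole x z.

(** ordinals <= omega_1: [Some xi] a countable ordinal, [None] = omega_1 *)
Definition ord1 := option Ord.

Definition ord1_le (o o' : ord1) : Prop :=
  match o, o' with
  | _, None => True
  | None, Some _ => False
  | Some x, Some y => ole x y
  end.

Fixpoint iter_deriv {X : Type} (d : X -> X -> R) (f : X -> R) (a b : R)
    (F : X -> Prop) (xi : Ord) : X -> Prop :=
  match xi with
  | OZ => F
  | OS xi' => sderiv d f a b (iter_deriv d f a b F xi')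
  | OL g => fun x => forall n, iter_deriv d f a b F (g n) x
  end.

Definition is_alpha {X : Type} (d : X -> X -> R) (f : X -> R) (F : X -> Prop)
    (a b : R) (o : ord1) : Prop :=
  match o with
  | Some xi => mempty (iter_deriv d f a b F xi) /\
      forall eta, mempty (iter_deriv d f a b F eta) -> ole xi eta
  | None => forall eta, ~ mempty (iter_deriv d f a b F eta)
  end.

(* Main.v *)
Require Import Defs.
From Stdlib Require Import Reals List Lra Lia Classical ClassicalEpsilon.
Open Scope R_scope.

Fixpoint le' (x : Ord) : Ord -> Prop :=
  match x with
  | OZ => fun _ => True
  | OS x' => fix ltp (y : Ord) : Prop :=
      match y with
      | OZ => False
      | OS y' => le' x' y'
      | OL h => exists n, ltp (h n)
      end
  | OL g => fun y => forall n, le' (g n) y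
  end.

Lemma le'_cocone : forall x g n, le' x (g n) -> le' x (OL g).
Proof.
  induction x as [|x IH|k IH]; intros g n H.
  - exact I.
  - exists n; exact H.
  - intro m; apply (IH m g n); apply H.
Qed.

Lemma le'_refl : forall x, le' x x.
Proof.
  induction x as [|x IH|g IH].
  - exact I.
  - exact IH.
  - intro n; apply (le'_cocone _ g n); apply IH.
Qed.

Lemma C_of_A x : (forall y z, le' x y -> le' y z -> le' x z) ->
  forall z y, le' x y -> le' (OS y) z -> le' (OS x) z.
Proof.
  intros A z; induction z as [|z IHz|h IHh]; intros y H1 H2.
  - contradiction.
  - exact (A y z H1 H2).
  - destruct H2 as [n Hn]; exists n; exact (IHh n y H1 Hn).
Qed.

Lemma le'_trans : forall x y z, le' x y -> le' y z -> le' x z.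
Proof.
  induction x as [|x IH|g IH].
  - intros; exact I.
  - intros y; induction y as [|y IHy|h IHh]; intros z H1 H2.
    + contradiction.
    + exact (C_of_A x IH z y H1 H2).
    + destruct H1 as [n Hn]; exact (IHh n z Hn (H2 n)).
  - intros y z H1 H2 n; exact (IH n y z (H1 n) H2).
Qed.

Lemma le'_succ : forall w, le' w (OS w).
Proof.
  induction w as [|w IH|g IH].
  - exact I.
  - exact IH.
  - intro n. apply le'_trans with (OS (g n)); [apply IH|].
    change (le' (g n) (OL g)). apply (le'_cocone _ g n); apply le'_refl.
Qed.

Lemma lt_le : forall w z, le' (OS z) w -> le' z w.
Proof.
  induction w as [|w IH|h IH]; intros z H.
  - contradiction.
  - apply le'_trans with w; [exact H| apply le'_succ].
  - destruct H as [n Hn]. apply (le'_cocone _ h n). apply IH; exact Hn.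
Qed.

Lemma ole_le' : forall x y, ole x y -> le' x y.
Proof.
  intros x y H; induction H.
  - exact I.
  - apply le'_succ.
  - exact IHole.
  - eapply le'_cocone; eauto.
  - intro n; apply H0.
  - eapply le'_trans; eauto.
Qed.

Lemma le'_ole : forall x y, le' x y -> ole x y.
Proof.
  induction x as [|x IH|g IH].
  - intros; apply ole_Z.
  - intro y; induction y as [|y IHy|h IHh]; intro H.
    + contradiction.
    + apply ole_S; apply IH; exact H.
    + destruct H as [n Hn]. apply ole_cocone with n. apply IHh; exact Hn.
  - intros y H; apply ole_limiting; intro n; apply IH; apply H.
Qed.

Lemma tot : forall x y, ~ le' (OS y) x -> le' x y.
Proof.
  induction x as [|x IH|g IH]; intros y H.
  - exact I.
  - induction y as [|y IHy|h IHh].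
    + exfalso; apply H; exact I.
    + apply IH. intro H'; exact (H H').
    + apply NNPP; intro Hn. apply H. intro n.
      apply NNPP; intro Hn2. apply Hn. exists n. apply IHh. exact Hn2.
  - intro n. apply IH. intro H'; apply H. exists n; exact H'.
Qed.

Lemma wf_lt : well_founded (fun x y => le' (OS x) y).
Proof.
  assert (aux : forall y x, le' x y -> Acc (fun x y => le' (OS x) y) x).
  { induction y as [|y IH|h IH]; intros x Hx; constructor; intros z Hz.
    - destruct (le'_trans _ _ _ Hz Hx).
    - apply IH. exact (le'_trans _ _ _ Hz Hx).
    - destruct (le'_trans _ _ _ Hz Hx) as [n Hn].
      apply (IH n). apply lt_le; exact Hn. }
  intro x; apply (aux x x (le'_refl x)).
Qed.

Lemma min_exists (P : Ord -> Prop) : (exists x, P x) ->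
  exists m, P m /\ forall y, P y -> le' m y.
Proof.
  intros [x Hx]. revert Hx. induction x as [x IH] using (well_founded_ind wf_lt).
  intro Hx. destruct (classic (exists z, P z /\ le' (OS z) x)) as [[z [Hz Hzx]]|Hn].
  - exact (IH z Hzx Hz).
  - exists x; split; [exact Hx|]. intros y Hy. apply tot. intro H; apply Hn; eauto.
Qed.
Section Topo.
Context {X : Type} (d : X -> X -> R) (Hm : is_metric d) (f : X -> R) (a b : R).

Definition closedS (F : X -> Prop) := forall x, mclosure d F x -> F x.

Lemma d_refl x : d x x = 0.
Proof. destruct Hm as [_ [H _]]; apply H; reflexivity. Qed.
Lemma d_sym x y : d x y = d y x.
Proof. destruct Hm as [_ [_ [H _]]]; apply H. Qed.
Lemma d_tri x y z : d x z <= d x y + d y z.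
Proof. destruct Hm as [_ [_ [_ H]]]; apply H. Qed.
Lemma d_pos x y : 0 <= d x y.
Proof. destruct Hm as [H _]; apply H. Qed.
Lemma d_zero x y : d x y = 0 -> x = y.
Proof. destruct Hm as [_ [H _]]; apply H. Qed.

Lemma closure_mono (A B : X -> Prop) : (forall x, A x -> B x) ->
  forall x, mclosure d A x -> mclosure d B x.
Proof.
  intros HAB x H eps He. destruct (H eps He) as [y [Hy Hxy]]. eauto.
Qed.

Lemma closure_closed A : closedS (mclosure d A).
Proof.
  intros x H eps He. destruct (H (eps/2)) as [y [Hy Hxy]]; [lra|].
  destruct (Hy (eps/2)) as [z [Hz Hyz]]; [lra|]. exists z; split; auto.
  pose proof (d_tri x y z). lra.
Qed.

Lemma sderiv_closed F : closedS (sderiv d f a b F).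
Proof.
  intros x H; split.
  - apply closure_closed. revert H; apply closure_mono. intros y [H1 _]; exact H1.
  - apply closure_closed. revert H; apply closure_mono. intros y [_ H1]; exact H1.
Qed.

Lemma sderiv_sub F : closedS F -> forall x, sderiv d f a b F x -> F x.
Proof.
  intros HF x [H1 _]. apply HF. revert H1; apply closure_mono. intros y [Hy _]; exact Hy.
Qed.

Lemma sderiv_mono (F G : X -> Prop) : (forall x, F x -> G x) ->
  forall x, sderiv d f a b F x -> sderiv d f a b G x.
Proof.
  intros HFG x [H1 H2]; split; revert H1 H2.
  - intros H1 _; revert H1; apply closure_mono. intros y [Hy Hf]; auto.
  - intros _ H2; revert H2; apply closure_mono. intros y [Hy Hf]; auto.
Qed.

Lemma iter_mono (F G : X -> Prop) : (forall x, F x -> G x) ->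
  forall eta x, iter_deriv d f a b F eta x -> iter_deriv d f a b G eta x.
Proof.
  intros HFG eta; induction eta as [|e IH|g IH]; simpl.
  - exact HFG.
  - apply sderiv_mono; exact IH.
  - intros x H n; apply IH; apply H.
Qed.

Lemma iter_closed F : closedS F -> forall eta, closedS (iter_deriv d f a b F eta).
Proof.
  intros HF eta; induction eta as [|e IH|g IH]; simpl.
  - exact HF.
  - apply sderiv_closed.
  - intros x Hx n. apply IH. revert Hx; apply closure_mono. intros y Hy; apply Hy.
Qed.

Lemma iter_sub F : closedS F -> forall eta x, iter_deriv d f a b F eta x -> F x.
Proof.
  intros HF eta; induction eta as [|e IH|g IH]; simpl; intros x Hx.
  - exact Hx.
  - apply IH. apply (sderiv_sub _ (iter_closed F HF e)); exact Hx.
  - apply (IH 0%nat); apply Hx.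
Qed.

Lemma iter_anti F : closedS F -> forall u v, ole u v ->
  forall z, iter_deriv d f a b F v z -> iter_deriv d f a b F u z.
Proof.
  intros HF u v H; induction H; intros w0 Hz.
  - apply (iter_sub F HF _ _ Hz).
  - apply (sderiv_sub _ (iter_closed F HF x)); exact Hz.
  - simpl in *. revert Hz; apply sderiv_mono; exact IHole.
  - apply IHole. apply Hz.
  - intro n; apply H0; exact Hz.
  - auto.
Qed.

Lemma arch e : 0 < e -> exists n : nat, / INR (S n) < e.
Proof.
  intro He. destruct (archimed_cor1 e He) as [N [HN HN0]].
  exists N. apply Rle_lt_trans with (/ INR N); [|exact HN].
  apply Rinv_le_contravar. apply lt_0_INR; exact HN0. apply le_INR; lia.
Qed.

Lemma inv_pos n : 0 < / INR (S n).
Proof. apply Rinv_0_lt_compat. apply lt_0_INR; lia. Qed.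

Lemma inv_mono i M : (i <= M)%nat -> / INR (S M) <= / INR (S i).
Proof.
  intro H. apply Rinv_le_contravar. apply lt_0_INR; lia. apply le_INR; lia.
Qed.

Lemma list_max (l : list nat) : exists M, forall i, In i l -> (i <= M)%nat.
Proof.
  induction l as [|j l [M HM]].
  - exists 0%nat; intros i [].
  - exists (Nat.max j M). intros i [Hi|Hi]; [subst; lia|]. specialize (HM i Hi); lia.
Qed.

Lemma compact_closed K : mcompact d K -> closedS K.
Proof.
  intros HK z0 Hz. apply NNPP; intro Hnz.
  destruct (HK nat (fun n y => / INR (S n) < d z0 y)) as [l Hl].
  - intros n y Hy. exists (d z0 y - / INR (S n)); split; [lra|].
    intros w Hw. pose proof (d_tri z0 w y). rewrite (d_sym w y) in H. lra.
  - intros y Hy. assert (Hne : z0 <> y) by (intro; subst; contradiction).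
    assert (0 < d z0 y). { destruct (d_pos z0 y); auto. exfalso; apply Hne; apply d_zero; auto. }
    destruct (arch _ H) as [n Hn]; eauto.
  - destruct (list_max l) as [M HM].
    destruct (Hz (/ INR (S M)) (inv_pos M)) as [y [Hy Hzy]].
    destruct (Hl y Hy) as [i [Hi Hu]]. pose proof (inv_mono _ _ (HM i Hi)). lra.
Qed.

Lemma compact_union2 K1 K2 : mcompact d K1 -> mcompact d K2 ->
  mcompact d (fun z => K1 z \/ K2 z).
Proof.
  intros H1 H2 I U HU Hc.
  destruct (H1 I U HU) as [l1 Hl1]; [intros; apply Hc; auto|].
  destruct (H2 I U HU) as [l2 Hl2]; [intros; apply Hc; auto|].
  exists (l1 ++ l2). intros x [Hx|Hx].
  - destruct (Hl1 x Hx) as [i [Hi Hu]]. exists i; split; auto. apply in_or_app; auto.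
  - destruct (Hl2 x Hx) as [i [Hi Hu]]. exists i; split; auto. apply in_or_app; auto.
Qed.

Lemma compact_seq x (Kn : nat -> X -> Prop) : (forall n, mcompact d (Kn n)) ->
  (forall n y, Kn n y -> d x y < / INR (S n)) ->
  mcompact d (fun z => z = x \/ exists n, Kn n z).
Proof.
  intros HK Hb I U HU Hc.
  destruct (Hc x (or_introl eq_refl)) as [i0 Hi0].
  destruct (HU i0 x Hi0) as [e [He Hball]]. destruct (arch e He) as [N HN].
  assert (Hfin : forall M, exists l, forall z, (exists n, (n < M)%nat /\ Kn n z) ->
                   exists i, In i l /\ U i z).
  { induction M as [|M [l Hl]].
    - exists nil; intros z [n [Hn _]]; lia.
    - destruct (HK M I U HU) as [lM HlM].
      { intros z Hz; apply Hc; right; exists M; auto. }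
      exists (l ++ lM). intros z [n [Hn Hz]]. destruct (Nat.eq_dec n M) as [E|E].
      + subst. destruct (HlM z Hz) as [i [Hi Hu]]. exists i; split; auto.
        apply in_or_app; auto.
      + destruct (Hl z) as [i [Hi Hu]]. { exists n; split; [lia|auto]. }
        exists i; split; auto. apply in_or_app; auto. }
  destruct (Hfin N) as [l Hl]. exists (i0 :: l). intros z [Hz|[n Hz]].
  - subst. exists i0; split; [left; auto|auto].
  - destruct (Compare_dec.lt_dec n N) as [Hlt|Hge].
    + destruct (Hl z) as [i [Hi Hu]]; [eauto|]. exists i; split; [right|]; auto.
    + exists i0; split; [left; auto|]. apply Hball.
      pose proof (Hb n z Hz). pose proof (inv_mono N n ltac:(lia)). lra.
Qed.

Definition rr (eps : R) (n : nat) := Rmin eps (/ INR (S n)).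

Lemma rr_pos eps n : 0 < eps -> 0 < rr eps n.
Proof. intro; unfold rr; apply Rmin_glb_lt; auto; apply inv_pos. Qed.

Lemma assemble x eps (Kf : nat -> X -> Prop) : 0 < eps ->
  (forall n, mcompact d (Kf n)) -> (forall n z, Kf n z -> d x z < rr eps n) ->
  mcompact d (fun z => z = x \/ exists n, Kf n z) /\
  (forall y, (y = x \/ exists n, Kf n y) -> d x y < eps).
Proof.
  intros He HK Hb. split.
  - apply compact_seq; auto. intros n y Hy. pose proof (Hb n y Hy).
    pose proof (Rmin_r eps (/ INR (S n))). unfold rr in *; lra.
  - intros y [Hy|[n Hy]].
    + subst; rewrite d_refl; auto.
    + pose proof (Hb n y Hy). pose proof (Rmin_l eps (/ INR (S n))). unfold rr in *; lra.
Qed.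

Lemma choice_fun (P : nat -> (X -> Prop) -> Prop) : (forall n, exists K, P n K) ->
  exists Kf, forall n, P n (Kf n).
Proof.
  intro H. exists (fun n => proj1_sig (constructive_indefinite_description _ (H n))).
  intro n. exact (proj2_sig (constructive_indefinite_description _ (H n))).
Qed.

Lemma close_small x eps (A : X -> Prop) : 0 < eps ->
  (forall n, exists y, A y /\ d x y < rr eps n) -> mclosure d A x.
Proof.
  intros He H delta Hd. destruct (arch delta Hd) as [n Hn].
  destruct (H n) as [y [Hy Hxy]]. exists y; split; auto.
  pose proof (Rmin_r eps (/ INR (S n))). unfold rr in *; lra.
Qed.

Lemma approx : forall eta x, iter_deriv d f a b (fun _ => True) eta x ->
  forall eps, 0 < eps -> exists K, mcompact d K /\ (forall y, K y -> d x y < eps) /\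
    iter_deriv d f a b K eta x.
Proof.
  induction eta as [|e IH|g IH]; intros x Hx eps He.
  - destruct (assemble x eps (fun _ _ => False) He) as [H1 H2].
    + intros n I U _ _. exists nil; intros z [].
    + intros n z [].
    + exists (fun z => z = x \/ exists n : nat, False); split; [|split]; auto.
      simpl; left; auto.
  - destruct Hx as [Ha Hb].
    assert (Hn : forall n, exists K, mcompact d K /\ (forall z, K z -> d x z < rr eps n) /\
      (exists y, iter_deriv d f a b K e y /\ f y < a /\ d x y < rr eps n) /\
      (exists y, iter_deriv d f a b K e y /\ f y > b /\ d x y < rr eps n)).
    { intro n. pose proof (rr_pos eps n He) as Hr.
      destruct (Ha (rr eps n / 2)) as [y [[Hy Hfy] Hxy]]; [lra|].
      destruct (Hb (rr eps n / 2)) as [y' [[Hy' Hfy'] Hxy']]; [lra|].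
      destruct (IH y Hy (rr eps n / 2)) as [K1 [HK1 [Hb1 Hi1]]]; [lra|].
      destruct (IH y' Hy' (rr eps n / 2)) as [K2 [HK2 [Hb2 Hi2]]]; [lra|].
      exists (fun z => K1 z \/ K2 z). split; [apply compact_union2; auto|split; [|split]].
      - intros z [Hz|Hz].
        + pose proof (Hb1 z Hz). pose proof (d_tri x y z). lra.
        + pose proof (Hb2 z Hz). pose proof (d_tri x y' z). lra.
      - exists y; split; [|split; [auto|lra]].
        revert Hi1; apply iter_mono; auto.
      - exists y'; split; [|split; [auto|lra]].
        revert Hi2; apply iter_mono; auto. }
    destruct (choice_fun _ Hn) as [Kf HKf].
    destruct (assemble x eps Kf He) as [H1 H2].
    + intro n; apply HKf.
    + intro n; apply HKf.
    + exists (fun z => z = x \/ exists n, Kf n z); split; [|split]; auto.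
      simpl. split.
      * apply (close_small x eps _ He). intro n. destruct (HKf n) as [_ [_ [[y [Hy1 [Hy2 Hy3]]] _]]].
        exists y; split; auto. split; auto. revert Hy1; apply iter_mono. eauto.
      * apply (close_small x eps _ He). intro n. destruct (HKf n) as [_ [_ [_ [y [Hy1 [Hy2 Hy3]]]]]].
        exists y; split; auto. split; auto. revert Hy1; apply iter_mono. eauto.
  - assert (Hn : forall n, exists K, mcompact d K /\ (forall z, K z -> d x z < rr eps n) /\
      iter_deriv d f a b K (g n) x).
    { intro n. apply (IH n x (Hx n) (rr eps n) (rr_pos eps n He)). }
    destruct (choice_fun _ Hn) as [Kf HKf].
    destruct (assemble x eps Kf He) as [H1 H2].
    + intro n; apply HKf.
    + intro n; apply HKf.
    + exists (fun z => z = x \/ exists n, Kf n z); split; [|split]; auto.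
      simpl. intro n. destruct (HKf n) as [_ [_ Hi]]. revert Hi; apply iter_mono. eauto.
Qed.

Lemma alpha_exists F : exists o, is_alpha d f F a b o.
Proof.
  destruct (classic (exists eta, mempty (iter_deriv d f a b F eta))) as [H|H].
  - destruct (min_exists _ H) as [m [Hm1 Hm2]]. exists (Some m); simpl; split; auto.
    intros eta He; apply le'_ole; auto.
  - exists None; simpl. intros eta He; apply H; eauto.
Qed.

End Topo.

Theorem proposition4p1 (X : Type) (d : X -> X -> R) (HX : polish d)
  (f : X -> R) (Hf : baire1 d f) (a b : R) (Hab : a < b) :
  exists o : ord1,
    is_alpha d f (fun _ => True) a b o /\
    (* o is an upper bound of { alpha(f,K,a,b) : K mcompact } *)
    (forall (K : X -> Prop) (oK : ord1),
        mcompact d K -> is_alpha d f K a b oK -> ord1_le oK o) /\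
    (* and the least one *)
    (forall u : ord1,
        (forall (K : X -> Prop) (oK : ord1),
            mcompact d K -> is_alpha d f K a b oK -> ord1_le oK u) ->
        ord1_le o u).
Proof.
  destruct HX as [Hm _].
  destruct (alpha_exists d f a b (fun _ => True)) as [o Ho].
  exists o. split; [exact Ho|split].
  - intros K oK HK HoK. destruct o as [xi|]; [|destruct oK; exact I]. destruct Ho as [He _].
    destruct oK as [w|].
    + simpl. destruct HoK as [_ Hl]. apply Hl. intros z Hz. apply (He z).
      revert Hz; apply iter_mono; auto.
    + simpl in HoK. exfalso; apply (HoK xi). intros z Hz; apply (He z).
      revert Hz; apply iter_mono; auto.
  - intros u Hu. destruct u as [v|]; [|destruct o; exact I].
    assert (Hv : mempty (iter_deriv d f a b (fun _ => True) v)).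
    { intros x Hx. destruct (approx d Hm f a b v x Hx 1 Rlt_0_1) as [K [HK [_ HxK]]].
      destruct (alpha_exists d f a b K) as [oK HoK].
      specialize (Hu K oK HK HoK). destruct oK as [w|]; simpl in Hu; [|contradiction].
      destruct HoK as [Hw _]. apply (Hw x).
      apply (iter_anti d Hm f a b K (compact_closed d Hm K HK) w v Hu x HxK). }
    destruct o as [xi|]; simpl in *.
    + destruct Ho as [_ Hl]; apply Hl; auto.
    + exact (Ho v Hv).
Qed.
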